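(* Let $(\mathcal{M},\mathcal{L})$ be a regular symplectic pair with $\mathcal{M},\mathcal{L}\in\mathbb{C}^{2n\times2n}$ and $\mathrm{ind}_\infty(\mathcal{M},\mathcal{L})=1$. Let $\hat n$, $\ell=n-\hat n$, $U_0,U_\infty\in\mathbb{C}^{2n\times\ell}$, $U_1\in\mathbb{C}^{2n\times2\hat n}$, $\mathbf{U}=[U_1\,|\,U_0,U_\infty]$ and a symplectic $\widehat{\mathcal{S}}\in\mathbb{C}^{2\hat n\times 2\hat n}$ satisfy $\mathbf{U}^H\mathcal{J}_n\mathbf{U}=\mathcal{J}_{\hat n}\oplus\mathcal{J}_\ell$, $\mathcal{M}U_0=0$, $\mathcal{L}U_\infty=0$, $\mathcal{M}U_1=\mathcal{L}U_1\widehat{\mathcal{S}}$. For each $\varepsilon>0$ let $\Phi^\varepsilon\in\mathbb{C}^{\ell\times\ell}$ be nonsingular with $\|\Phi^\varepsilon\|\le\varepsilon$, and set $$\mathcal{M}^\varepsilon=\mathcal{M}-\mathcal{L}U_0(\Phi^\varepsilon)^HU_\infty^H\mathcal{J}_n,\qquad \mathcal{L}^\varepsilon=\mathcal{L}+\mathcal{M}U_\infty\Phi^\varepsilon U_0^H\mathcal{J}_n.$$ Then $(\mathcal{M}^\varepsilon,\mathcal{L}^\varepsilon)$ is a regular symplectic pair with $\mathcal{L}^\varepsilon$ invertible, and $$\mathcal{M}^\varepsilon U_0=\mathcal{L}^\varepsilon U_0(\Phi^\varepsilon)^H,\quad \mathcal{M}^\varepsilon U_\infty\Phi^\varepsilon=\mathcal{L}^\varepsilon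 U_\infty,\quad \mathcal{M}^\varepsilon U_1=\mathcal{L}^\varepsilon U_1\widehat{\mathcal{S}},$$ and $(\mathcal{M}^\varepsilon,\mathcal{L}^\varepsilon)\to(\mathcal{M},\mathcal{L})$ as $\varepsilon\to0$.
   Context: $\mathcal{J}_m=\begin{bmatrix}0&I_m\\-I_m&0\end{bmatrix}$. $\mathcal{S}$ is symplectic if $\mathcal{S}\mathcal{J}_m\mathcal{S}^H=\mathcal{J}_m$. A pair $(\mathcal{M},\mathcal{L})$ is symplectic if $\mathcal{M}\mathcal{J}_n\mathcal{M}^H=\mathcal{L}\mathcal{J}_n\mathcal{L}^H$, regular if $\det(\mathcal{M}-\lambda\mathcal{L})\ne0$ for some $\lambda$. $\mathrm{ind}_\infty(A,B)$ is the nilpotency index of the nilpotent block $N$ in the Kronecker canonical form $PAQ=\mathrm{diag}(J,I)$, $PBQ=\mathrm{diag}(I,N)$ of a regular pair, and is $0$ if $B$ is invertible. *)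

(* Defs.v *)
From mathcomp Require Import all_boot all_algebra.
From mathcomp Require Import reals.
From mathcomp.real_closed Require Import complex.
Set Implicit Arguments. Unset Strict Implicit. Unset Printing Implicit Defensive.
Import GRing.Theory Num.Theory.
Local Open Scope ring_scope.

Definition ctr (R : realType) m n (A : 'M[R[i]]_(m, n)) : 'M[R[i]]_(n, m) :=
  (map_mx (fun z : R[i] => Num.conj z) A)^T.

Definition Jmx (R : realType) (m : nat) : 'M[R[i]]_(m + m) :=
  block_mx 0 1%:M (- 1%:M) 0.

Definition symplectic (R : realType) m (S : 'M[R[i]]_(m + m)) : Prop :=
  S *m Jmx R m *m ctr S = Jmx R m.

Definition symplectic_pair (R : realType) n (M L : 'M[R[i]]_(n + n)) : Prop :=
  M *m Jmx R n *m ctr M = L *m Jmx R n *m ctr L.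

Definition regular_pair (R : realType) m (M L : 'M[R[i]]_m) : Prop :=
  exists lambda : R[i], \det (M - lambda *: L) != 0.

Definition mxpow (R : realType) s (N : 'M[R[i]]_s) (k : nat) : 'M[R[i]]_s :=
  iter k (mulmx N) 1%:M.

Definition nil_index (R : realType) s (N : 'M[R[i]]_s) (k : nat) : Prop :=
  mxpow N k = 0 /\ (forall j, (j < k)%N -> mxpow N j != 0).

(* ind_inf(A, B) = k : in a Weierstrass/Kronecker canonical form
   P A Q = diag(J, I), P B Q = diag(I, N) with N nilpotent, N has
   nilpotency index k (k = 0 iff the N block is empty, i.e. B invertible). *)
Definition ind_inf (R : realType) m (A B : 'M[R[i]]_m) (k : nat) : Prop :=
  exists (r s : nat) (e : (r + s = m)%N) (P Q : 'M[R[i]]_m)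
         (J : 'M[R[i]]_r) (N : 'M[R[i]]_s),
    [/\ P \in unitmx, Q \in unitmx,
        P *m A *m Q = castmx (e, e) (block_mx J 0 0 1%:M),
        P *m B *m Q = castmx (e, e) (block_mx 1%:M 0 0 N)
      & nil_index N k].

Definition cabs2 (R : realType) (z : R[i]) : R :=
  complex.Re z ^+ 2 + complex.Im z ^+ 2.

Definition vnorm2 (R : realType) l (x : 'cV[R[i]]_l) : R :=
  \sum_(i < l) cabs2 (x i 0).

Definition spec_norm_le (R : realType) l k (Phi : 'M[R[i]]_(l, k)) (eps : R) : Prop :=
  0 <= eps /\ forall x : 'cV[R[i]]_k, vnorm2 (Phi *m x) <= eps ^+ 2 * vnorm2 x.

(* A_eps --> A as eps --> 0+ (entrywise, equivalently in any norm) *)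
Definition mx_cvg0 (R : realType) m n (Aeps : R -> 'M[R[i]]_(m, n)) (A : 'M[R[i]]_(m, n)) : Prop :=
  forall delta : R, 0 < delta -> exists eta : R, 0 < eta /\
    forall eps : R, 0 < eps -> eps < eta ->
      forall i j, Num.sqrt (cabs2 (Aeps eps i j - A i j)) < delta.

(* Main.v *)
Require Import Defs.
From mathcomp Require Import all_boot all_order all_algebra.
From mathcomp Require Import reals lra.
From mathcomp.real_closed Require Import complex.
Import Order.TTheory GRing.Theory Num.Theory.
Local Open Scope ring_scope.
Section S.
Variable R : realType.
Implicit Types m n p : nat.
Lemma ctrM m n p (A : 'M[R[i]]_(m,n)) (B : 'M[R[i]]_(n,p)) : ctr (A *m B) = ctr B *m ctr A.
Proof. by rewrite /ctr map_mxM trmx_mul. Qed.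
Lemma ctrK m n (A : 'M[R[i]]_(m,n)) : ctr (ctr A) = A.
Proof. by apply/matrixP=> i j; rewrite /ctr !mxE conjCK. Qed.
Lemma ctrB m n (A B : 'M[R[i]]_(m,n)) : ctr (A - B) = ctr A - ctr B.
Proof. by rewrite /ctr map_mxB linearB. Qed.
Lemma ctrD m n (A B : 'M[R[i]]_(m,n)) : ctr (A + B) = ctr A + ctr B.
Proof. by rewrite /ctr map_mxD linearD. Qed.
Lemma ctr_row m n1 n2 (A : 'M[R[i]]_(m,n1)) (B : 'M[R[i]]_(m,n2)) :
  ctr (row_mx A B) = col_mx (ctr A) (ctr B).
Proof. by rewrite /ctr map_row_mx tr_row_mx. Qed.
Lemma ctrJ n : ctr (Jmx R n) = - Jmx R n.
Proof. rewrite /ctr /Jmx map_block_mx map_mxN map_mx1 !map_mx0 tr_block_mx !trmx0 trmx1 raddfN /= trmx1 opp_block_mx oppr0 opprK; congr block_mx; apply/matrixP=> i j; rewrite !mxE. Qed.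
Lemma JJ n : Jmx R n *m Jmx R n = -1%:M.
Proof.
rewrite /Jmx mulmx_block !mul0mx !mulmx0 !mul1mx !mulmx1 !add0r !addr0.
by rewrite (scalar_mx_block n n 1) opp_block_mx oppr0.
Qed.

Lemma regular_of_unit n (A B : 'M[R[i]]_n) : B \in unitmx -> regular_pair A B.
Proof.
move=> uB; set C := A *m invmx B.
have pn0 : char_poly C != 0 by apply: monic_neq0; apply: char_poly_monic.
set rs := [seq (k%:R : R[i]) | k <- iota 0 (size (char_poly C))].
have [lam Hlam] : exists lam, ~~ root (char_poly C) lam.
  case: (boolP (all (root (char_poly C)) rs)) => H.
    have Hu : uniq rs.
      rewrite map_inj_uniq ?iota_uniq // => a b /eqP.
      by rewrite eqr_nat => /eqP.
    by have := max_poly_roots pn0 H Hu; rewrite size_map size_iota ltnn.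
  by move: H => /allPn [x _ Hx]; exists x.
exists lam.
have : C - lam%:M \in unitmx.
  rewrite -row_free_unit -kermx_eq0.
  by move: Hlam; rewrite -eigenvalue_root_char /eigenvalue /eigenspace negbK.
have -> : A - lam *: B = (C - lam%:M) *m B.
  by rewrite mulmxBl mulmxKV // mul_scalar_mx.
by rewrite -unitfE -unitmxE unitmx_mul uB andbT.
Qed.

Definition rn (z : R[i]) : R := Num.sqrt (cabs2 z).
Lemma rnE z : `|z| = (rn z)%:C%C.
Proof. by rewrite normc_def. Qed.
Lemma rn_ge0 z : 0 <= rn z.
Proof. exact: sqrtr_ge0. Qed.
Lemma Cinj (a b : R) : (a%:C%C = b%:C%C :> R[i]) -> a = b.
Proof. exact: (congr1 (@complex.Re R)). Qed.
Lemma rnM x y : rn (x * y) = rn x * rn y.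
Proof. by apply: Cinj; rewrite rmorphM /= -!rnE normrM. Qed.
Lemma rn_conj x : rn (x^*) = rn x.
Proof. by apply: Cinj; rewrite -!rnE norm_conjC. Qed.
Lemma rnN x : rn (- x) = rn x.
Proof. by apply: Cinj; rewrite -!rnE normrN. Qed.
Lemma rn_sum k (f : 'I_k -> R[i]) : rn (\sum_(a < k) f a) <= \sum_(a < k) rn (f a).
Proof.
rewrite -lecR -rnE rmorph_sum /=.
by apply: le_trans (ler_norm_sum _ _ _) _; apply: ler_sum => a _; rewrite rnE.
Qed.

Lemma cabs2_ge0 (z : R[i]) : 0 <= cabs2 z.
Proof. by rewrite /cabs2 addr_ge0 ?sqr_ge0. Qed.

Lemma entry_bound m k k' n (A : 'M[R[i]]_(m,k)) (P : 'M[R[i]]_(k,k')) (B : 'M[R[i]]_(k',n)) e i j :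
  (forall a b, rn (P a b) <= e) ->
  rn ((A *m P *m B) i j) <= e * \sum_(b < k') \sum_(a < k) rn (A i a) * rn (B b j).
Proof.
move=> hP; rewrite !mxE. apply: le_trans (rn_sum _ _) _.
rewrite mulr_sumr; apply: ler_sum => b _.
rewrite rnM !mxE mulr_sumr.
apply: le_trans (ler_wpM2r (rn_ge0 _) (rn_sum _ _)) _.
rewrite mulr_suml; apply: ler_sum => a _; rewrite rnM.
rewrite mulrAC [e * _]mulrC; apply: ler_wpM2l; last exact: hP.
by rewrite mulr_ge0 ?rn_ge0.
Qed.

Lemma spec_entry l (P : 'M[R[i]]_l) e : spec_norm_le P e -> forall a b, rn (P a b) <= e.
Proof.
move=> [e0 H] a b; have := H (delta_mx b 0); rewrite -colE.
have -> : vnorm2 (delta_mx b 0 : 'cV[R[i]]_l) = 1.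
  rewrite /vnorm2 (bigD1 b) //= big1 => [|c cb]; rewrite mxE.
    by rewrite !eqxx /cabs2 /= expr1n expr0n /= addr0 addr0.
  by rewrite (negbTE cb) /cabs2 /= expr0n /= addr0.
rewrite mulr1 => H2.
have H3 : cabs2 (P a b) <= e ^+ 2.
  apply: le_trans H2; rewrite /vnorm2 (bigD1 a) //= mxE ler_wpDr //.
  by apply: sumr_ge0 => c _; apply: cabs2_ge0.
by rewrite /rn -(ger0_norm e0) -sqrtr_sqr ler_wsqrtr.
Qed.

Lemma cvg_gen m n k k' (A : 'M[R[i]]_(m,k)) (B : 'M[R[i]]_(k',n))
  (P : R -> 'M[R[i]]_(k,k')) (M0 : 'M[R[i]]_(m,n)) (F : R -> 'M[R[i]]_(m,n)) :
  (forall eps, 0 < eps -> forall a b, rn (P eps a b) <= eps) ->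
  (forall eps, 0 < eps -> F eps = M0 + A *m P eps *m B) -> mx_cvg0 F M0.
Proof.
move=> hP hF delta d0.
pose C i j := \sum_(b < k') \sum_(a < k) rn (A i a) * rn (B b j).
have C0 i j : 0 <= C i j.
  by apply: sumr_ge0 => b _; apply: sumr_ge0 => a _; rewrite mulr_ge0 ?rn_ge0.
pose T := 1 + \sum_i \sum_j C i j.
have aux : forall x y z : R, 0 <= y -> 0 <= z -> x <= 1 + (x + y + z) by move=> x y z; lra.
have CT i j : C i j <= T.
  rewrite /T (bigD1 i) //= (bigD1 j) //= aux //.
    by apply: sumr_ge0 => c _.
  by apply: sumr_ge0 => c _; apply: sumr_ge0 => d _.
have T0 : 0 < T.
  have : 0 <= \sum_i \sum_j C i j.
    by apply: sumr_ge0 => c _; apply: sumr_ge0 => d _.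
  rewrite /T; lra.
exists (delta / T); split; first exact: divr_gt0.
move=> eps e0 elt i j; rewrite hF // [(M0 + _) i j]mxE addrAC subrr add0r.
change (rn ((A *m P eps *m B) i j) < delta).
apply: le_lt_trans (@entry_bound _ _ _ _ A (P eps) B eps i j (hP eps e0)) _.
apply: le_lt_trans (ler_wpM2l (ltW e0) (CT i j)) _.
by rewrite -ltr_pdivlMr.
Qed.
End S.


Lemma sympl_core (R : realType) n k (K M L : 'M[R[i]]_n) (U0 Uinf : 'M[R[i]]_(n, k)) (P : 'M[R[i]]_k) :
  (forall p (X : 'M[R[i]]_(n, p)), K *m (K *m X) = - X) ->
  ctr K = - K ->
  (forall p (X : 'M[R[i]]_(k, p)), ctr U0 *m (K *m (U0 *m X)) = 0) ->
  (forall p (X : 'M[R[i]]_(k, p)), ctr Uinf *m (K *m (Uinf *m X)) = 0) ->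
  M *m K *m ctr M = L *m K *m ctr L ->
  (M - L *m U0 *m ctr P *m ctr Uinf *m K) *m K *m ctr (M - L *m U0 *m ctr P *m ctr Uinf *m K)
  = (L + M *m Uinf *m P *m ctr U0 *m K) *m K *m ctr (L + M *m Uinf *m P *m ctr U0 *m K).
Proof.
move=> JK cK X6K X9K HK.
rewrite ctrB ctrD !ctrM !ctrK cK.
move: X6K X9K HK; move: (ctr M) (ctr L) (ctr U0) (ctr Uinf) (ctr P) => cM cL cU0 cUi cP X6K X9K HK.
rewrite !(mulmxBl, mulmxBr, mulmxDl, mulmxDr, mulmxN, mulNmx) -!mulmxA.
rewrite -!mulmxA in HK.
rewrite !JK ?mulmxN ?mulNmx ?X6K ?X9K ?mulmxN ?mulmx0 ?oppr0 ?subr0 ?opprK HK.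
by rewrite !addr0 addrAC.
Qed.

Section Alg.
Variables (R : realType) (nh l : nat).
Local Notation N := (nh + l)%N.
Local Notation J := (Jmx R (nh + l)%N).
Variables (M L : 'M[R[i]]_(N + N)) (U1 : 'M[R[i]]_(N+N, nh+nh)) (U0 Uinf : 'M[R[i]]_(N+N, l)) (Shat : 'M[R[i]]_(nh+nh)) (P : 'M[R[i]]_l).
Hypothesis HU : ctr (row_mx U1 (row_mx U0 Uinf)) *m J *m row_mx U1 (row_mx U0 Uinf) = block_mx (Jmx R nh) 0 0 (Jmx R l).
Hypotheses (hU0 : M *m U0 = 0) (hUi : L *m Uinf = 0) (hU1 : M *m U1 = L *m U1 *m Shat).

Lemma blocks : (ctr U0 *m (J *m U1) = 0 /\ ctr Uinf *m (J *m U1) = 0) /\ [/\ ctr U0 *m (J *m U0) = 0, ctr U0 *m (J *m Uinf) = 1%:M, ctr Uinf *m (J *m U0) = -1%:M & ctr Uinf *m (J *m Uinf) = 0].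
Proof.
move: (Jmx R (nh + l)) HU => JJ H.
rewrite !ctr_row mul_col_mx (mul_col_mx (ctr U0)) !mul_mx_row in H.
rewrite !mul_col_mx block_mxEh in H.
case/eq_row_mx: H => H1 H2.
case/eq_col_mx: H1 => _; rewrite -col_mx0 => /eq_col_mx [E1 E2].
move: H2; rewrite -block_mxEh block_mxEv => /eq_col_mx [_].
rewrite -block_mxEh /Jmx => /eq_block_mx [E3 E4 E5 E6].
by rewrite !mulmxA E1 E2 E3 E4 E5 E6.
Qed.

Local Notation Me := (M - L *m U0 *m ctr P *m ctr Uinf *m J).
Local Notation Le := (L + M *m Uinf *m P *m ctr U0 *m J).

Lemma JJr k (X : 'M[R[i]]_(N + N, k)) : J *m (J *m X) = - X.
Proof. by rewrite mulmxA JJ mulNmx mul1mx. Qed.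

Lemma hMU0 : Me *m U0 = L *m U0 *m ctr P.
Proof.
have [_ [_ _ X8 _]] := blocks.
by rewrite mulmxBl -!mulmxA X8 hU0 !mulmxN mulmx1 sub0r opprK !mulmxA.
Qed.
Lemma hLU0 : Le *m U0 = L *m U0.
Proof. have [_ [X6 _ _ _]] := blocks. by rewrite mulmxDl -!mulmxA X6 !mulmx0 addr0. Qed.
Lemma hMUi : Me *m Uinf = M *m Uinf.
Proof. have [_ [_ _ _ X9]] := blocks. by rewrite mulmxBl -!mulmxA X9 !mulmx0 subr0. Qed.
Lemma hLUi : Le *m Uinf = M *m Uinf *m P.
Proof. have [_ [_ X7 _ _]] := blocks. by rewrite mulmxDl -!mulmxA X7 mulmx1 hUi add0r !mulmxA. Qed.
Lemma hMU1 : Me *m U1 = M *m U1.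
Proof. have [[_ X5] _] := blocks. by rewrite mulmxBl -!mulmxA X5 !mulmx0 subr0. Qed.
Lemma hLU1 : Le *m U1 = L *m U1.
Proof. have [[X4 _] _] := blocks. by rewrite mulmxDl -!mulmxA X4 !mulmx0 addr0. Qed.

Lemma sympl_eps : symplectic_pair M L -> symplectic_pair Me Le.
Proof.
rewrite /symplectic_pair => Hsp.
have [_ [X6 _ _ X9]] := blocks.
have X6r k (Y : 'M[R[i]]_(l, k)) : ctr U0 *m (J *m (U0 *m Y)) = 0 by rewrite mulmxA mulmxA -(mulmxA (ctr U0)) X6 mul0mx.
have X9r k (Y : 'M[R[i]]_(l, k)) : ctr Uinf *m (J *m (Uinf *m Y)) = 0 by rewrite mulmxA mulmxA -(mulmxA (ctr Uinf)) X9 mul0mx.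
exact: sympl_core (@JJr) (ctrJ _ _) X6r X9r Hsp.
Qed.

Lemma Le_unit : regular_pair M L -> P \in unitmx -> Le \in unitmx.
Proof.
move=> [lam Hlam] uP.
set U := row_mx U1 (row_mx U0 Uinf).
set Q := M - lam *: L.
have uQ : Q \in unitmx by rewrite unitmxE unitfE.
set K := block_mx (Jmx R nh) 0 0 (Jmx R l).
have uK : K \in unitmx.
  have : K *m (- K) = 1%:M.
    rewrite mulmxN /K mulmx_block !mulmx0 !mul0mx !addr0 !add0r !JJ.
    by rewrite opp_block_mx !opprK !oppr0 -scalar_mx_block.
  by case/mulmx1_unit.
have rK : \rank K = ((nh+nh)+(l+l))%N := mxrank_unit uK.
set X := row_mx (L *m U1) (row_mx (L *m U0) (M *m Uinf)).
pose D : 'M[R[i]]_((nh+nh)+(l+l)) := block_mx (Shat - lam%:M) 0 0 (block_mx (- lam%:M) 0 0 (1%:M : 'M[R[i]]_l)).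
have hQU : Q *m U = X *m D.
  rewrite /Q /U /X /D !mul_mx_row !mul_row_block !mulmx0 !addr0 !add0r.
  congr row_mx; [|congr row_mx].
  - by rewrite mulmxBl hU1 mulmxBr -scalemxAl mul_mx_scalar.
  - by rewrite mulmxBl hU0 sub0r -scalemxAl mulmxN mul_mx_scalar.
  - by rewrite mulmxBl -scalemxAl hUi scaler0 subr0 mulmx1.
pose D' : 'M[R[i]]_((nh+nh)+(l+l)) := block_mx (1%:M : 'M[R[i]]_(nh+nh)) 0 0 (block_mx (1%:M : 'M[R[i]]_l) 0 0 P).
pose D'i : 'M[R[i]]_((nh+nh)+(l+l)) := block_mx (1%:M : 'M[R[i]]_(nh+nh)) 0 0 (block_mx (1%:M : 'M[R[i]]_l) 0 0 (invmx P)).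
have hLU : Le *m U = X *m D'.
  rewrite /U /X /D' !mul_mx_row !mul_row_block !mulmx0 !addr0 !add0r !mulmx1.
  by rewrite hLU1 hLU0 hLUi.
have hX : X = X *m D' *m D'i.
  rewrite -mulmxA /D' /D'i mulmx_block !mulmx0 !mul0mx !addr0 !add0r !mulmx1.
  by rewrite mulmx_block !mulmx0 !mul0mx !addr0 !add0r !mulmx1 mulmxV // -!scalar_mx_block mulmx1.
have : ((nh+nh)+(l+l) <= \rank Le)%N.
  rewrite -rK.
  apply: (@leq_trans (\rank U)); first by rewrite /K -HU; exact: mxrankM_maxr.
  apply: (@leq_trans (\rank (Q *m U))); first by rewrite -{1}(mulKmx uQ U); exact: mxrankM_maxr.
  rewrite hQU; apply: leq_trans (mxrankM_maxl _ _) _.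
  rewrite hX; apply: leq_trans (mxrankM_maxl _ _) _.
  by rewrite -hLU; exact: mxrankM_maxl.
rewrite addnACA => H.
rewrite -row_free_unit /row_free eqn_leq rank_leq_row.
exact: H.
Qed.
End Alg.

Theorem theorem2p7 (R : realType) (nh l : nat)
  (M L : 'M[R[i]]_((nh + l) + (nh + l)))
  (U1 : 'M[R[i]]_((nh + l) + (nh + l), nh + nh))
  (U0 Uinf : 'M[R[i]]_((nh + l) + (nh + l), l))
  (Shat : 'M[R[i]]_(nh + nh))
  (Phi : R -> 'M[R[i]]_l) :
  regular_pair M L ->
  symplectic_pair M L ->
  ind_inf M L 1 ->
  symplectic Shat ->
  ctr (row_mx U1 (row_mx U0 Uinf)) *m Jmx R (nh + l) *m row_mx U1 (row_mx U0 Uinf)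
    = block_mx (Jmx R nh) 0 0 (Jmx R l) ->
  M *m U0 = 0 ->
  L *m Uinf = 0 ->
  M *m U1 = L *m U1 *m Shat ->
  (forall eps : R, 0 < eps -> Phi eps \in unitmx /\ spec_norm_le (Phi eps) eps) ->
  let Meps := fun eps : R =>
    M - L *m U0 *m ctr (Phi eps) *m ctr Uinf *m Jmx R (nh + l) in
  let Leps := fun eps : R =>
    L + M *m Uinf *m Phi eps *m ctr U0 *m Jmx R (nh + l) in
  (forall eps : R, 0 < eps ->
     [/\ regular_pair (Meps eps) (Leps eps),
         symplectic_pair (Meps eps) (Leps eps),
         Leps eps \in unitmx
       & [/\ Meps eps *m U0 = Leps eps *m U0 *m ctr (Phi eps),
              Meps eps *m Uinf *m Phi eps = Leps eps *m Uinf
            & Meps eps *m U1 = Leps eps *m U1 *m Shat]])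
  /\ mx_cvg0 Meps M /\ mx_cvg0 Leps L.
Proof.
move=> hreg hsp _ _ HU hU0 hUi hU1 hPhi Meps Leps.
split.
  move=> eps e0; have [uP _] := hPhi eps e0.
  have uL := @Le_unit _ _ _ _ _ _ _ _ _ _ HU hU0 hUi hU1 hreg uP.
  rewrite /Meps /Leps; split => //.
  - exact: regular_of_unit.
  - exact: (@sympl_eps _ _ _ _ _ _ _ _ _ HU).
  split.
  - by rewrite (@hMU0 _ _ _ _ _ _ _ _ _ HU hU0) (@hLU0 _ _ _ _ _ _ _ _ _ HU).
  - by rewrite (@hMUi _ _ _ _ _ _ _ _ _ HU) (@hLUi _ _ _ _ _ _ _ _ _ HU hUi).
  - by rewrite (@hMU1 _ _ _ _ _ _ _ _ _ HU) (@hLU1 _ _ _ _ _ _ _ _ _ HU) hU1.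
split.
  apply: (@cvg_gen R _ _ _ _ (-(L *m U0)) (ctr Uinf *m Jmx R (nh+l)) (fun eps => ctr (Phi eps))).
    move=> eps e0 a b; rewrite /ctr !mxE rn_conj.
    exact: (@spec_entry _ _ _ _ (hPhi eps e0).2 b a).
  by move=> eps _; rewrite /Meps !mulmxA !mulNmx.
apply: (@cvg_gen R _ _ _ _ (M *m Uinf) (ctr U0 *m Jmx R (nh+l)) Phi).
  move=> eps e0 a b.
  exact: (@spec_entry _ _ _ _ (hPhi eps e0).2 a b).
by move=> eps _; rewrite /Leps !mulmxA.
Qed.
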